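(* Let $L^x,L^y>0$, let $i\neq j$ be two boxes, each box $k\in\{i,j\}$ having center $(c^x_k,c^y_k)$, side lengths $(\ell^x_k,\ell^y_k)$ and given constants $lb^s_k>0$. Let $$Q^{lb}=\{(c_i,c_j,\ell_i,\ell_j)\in\mathbb{R}^8:\ \tfrac12\ell^s_k\le c^s_k\le L^s-\tfrac12\ell^s_k,\ \ell^s_k\ge lb^s_k\ \ \forall s\in\{x,y\},k\in\{i,j\}\}.$$ Consider binary variables $z^s_{p,q}$ for $s\in\{x,y\}$, $(p,q)\in\{(i,j),(j,i)\}$. Let $E$ be the set of $(c_i,c_j,\ell_i,\ell_j,z)\in\mathbb{R}^8\times\{0,1\}^4$ such that $(c_i,c_j,\ell_i,\ell_j)\in Q^{lb}$, $z$ is not identically zero, $z^s_{i,j}+z^s_{j,i}\le1$ for each $s$, $z^s_{p,q}=1$ implies $\mathscr{B}_p\leftarrow_s\mathscr{B}_q$, and whenever $z^s_{i,j}=z^s_{j,i}=0$ for a direction $s$ we have both $\mathscr{B}_i\not\leftarrow_s\mathscr{B}_j$ and $\mathscr{B}_j\not\leftarrow_s\mathscr{B}_i$. Then $E$ equals the set of $(c_i,c_j,\ell_i,\ell_j,z)$ satisfying \begin{align*} &\tfrac12\ell^s_p+lb^s_q z^s_{q,p}\le c^s_p\le L^s-\tfrac12\ell^s_p-lb^s_q z^s_{p,q} &&\forall s,\ (p,q)\in\{(i,j),(j,i)\},\\ &c^s_p+\tfrac12\ell^s_p\le c^s_q-\tfrac12\ell^s_q+L^s(1-z^s_{p,q})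 &&\forall s,\ (p,q)\in\{(i,j),(j,i)\},\\ &\ell^s_p\ge lb^s_p &&\forall s,\ p\in\{i,j\},\\ &z^x_{i,j}+z^x_{j,i}+z^y_{i,j}+z^y_{j,i}\ge1,\qquad z^s_{i,j}+z^s_{j,i}\le1 &&\forall s,\\ &z^s_{p,q}\in\{0,1\} &&\forall s,\ (p,q),\\ &c^s_p+\tfrac12\ell^s_p+L^s z^s_{p,q}\ge c^s_q-\tfrac12\ell^s_q+(lb^s_p+lb^s_q)(z^s_{i,j}+z^s_{j,i}) &&\forall s,\ (p,q)\in\{(i,j),(j,i)\}, \end{align*} where $s$ ranges over $\{x,y\}$.
   Context: Box $\mathscr{B}_p$ precedes $\mathscr{B}_q$ in direction $s$, written $\mathscr{B}_p\leftarrow_s\mathscr{B}_q$, if $c^s_p+\tfrac12\ell^s_p\le c^s_q-\tfrac12\ell^s_q$; $\mathscr{B}_p$ does not precede $\mathscr{B}_q$, written $\mathscr{B}_p\not\leftarrow_s\mathscr{B}_q$, if $c^s_p+\tfrac12\ell^s_p\ge c^s_q-\tfrac12\ell^s_q$. The set $E$ is the paper's embedding $\operatorname{Em}(Q^{lb},D^8,C^8)$: the eight branches of the refined disjunction $D^8$ are $(\mathscr{B}_i\leftarrow_y\mathscr{B}_j)\wedge(\mathscr{B}_i\not\leftarrow_x\mathscr{B}_j)\wedge(\mathscr{B}_j\not\leftarrow_x\mathscr{B}_i)$; $(\mathscr{B}_i\leftarrow_y\mathscr{B}_j)\wedge(\mathscr{B}_i\leftarrow_x\mathscr{B}_j)$;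 $(\mathscr{B}_i\leftarrow_x\mathscr{B}_j)\wedge(\mathscr{B}_i\not\leftarrow_y\mathscr{B}_j)\wedge(\mathscr{B}_j\not\leftarrow_y\mathscr{B}_i)$; $(\mathscr{B}_i\leftarrow_x\mathscr{B}_j)\wedge(\mathscr{B}_j\leftarrow_y\mathscr{B}_i)$; $(\mathscr{B}_j\leftarrow_y\mathscr{B}_i)\wedge(\mathscr{B}_i\not\leftarrow_x\mathscr{B}_j)\wedge(\mathscr{B}_j\not\leftarrow_x\mathscr{B}_i)$; $(\mathscr{B}_j\leftarrow_x\mathscr{B}_i)\wedge(\mathscr{B}_j\leftarrow_y\mathscr{B}_i)$; $(\mathscr{B}_j\leftarrow_x\mathscr{B}_i)\wedge(\mathscr{B}_i\not\leftarrow_y\mathscr{B}_j)\wedge(\mathscr{B}_j\not\leftarrow_y\mathscr{B}_i)$; $(\mathscr{B}_j\leftarrow_x\mathscr{B}_i)\wedge(\mathscr{B}_i\leftarrow_y\mathscr{B}_j)$, and each branch is encoded by the vector $z$ with $z^s_{p,q}=1$ exactly when the clause $\mathscr{B}_p\leftarrow_s\mathscr{B}_q$ appears in it. *)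

(* Defs.v *)
From Stdlib Require Import Reals Lra.
Open Scope R_scope.

Inductive dir : Set := DX | DY.
Inductive box : Set := Bi | Bj.

Definition other (p : box) : box := match p with Bi => Bj | Bj => Bi end.

(* Data: centers c k s, lengths l k s, binary variables z s p q
   (only p <> q, i.e. q = other p, is ever used). *)

Definition precedes (c l : box -> dir -> R) (s : dir) (p q : box) : Prop :=
  c p s + l p s / 2 <= c q s - l q s / 2.

Definition not_precedes (c l : box -> dir -> R) (s : dir) (p q : box) : Prop :=
  c p s + l p s / 2 >= c q s - l q s / 2.

Definition in_Qlb (L : dir -> R) (lb : box -> dir -> R) (c l : box -> dir -> R) : Prop :=
  forall (s : dir) (k : box),
    l k s / 2 <= c k s /\ c k s <= L s - l k s / 2 /\ l k s >= lb k s.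

Definition is_binary (x : R) : Prop := x = 0 \/ x = 1.

Definition in_E (L : dir -> R) (lb : box -> dir -> R) (c l : box -> dir -> R)
    (z : dir -> box -> box -> R) : Prop :=
  in_Qlb L lb c l /\
  (forall s p, is_binary (z s p (other p))) /\
  ~ (forall s p, z s p (other p) = 0) /\
  (forall s, z s Bi Bj + z s Bj Bi <= 1) /\
  (forall s p, z s p (other p) = 1 -> precedes c l s p (other p)) /\
  (forall s, z s Bi Bj = 0 -> z s Bj Bi = 0 ->
     not_precedes c l s Bi Bj /\ not_precedes c l s Bj Bi).

Definition in_F (L : dir -> R) (lb : box -> dir -> R) (c l : box -> dir -> R)
    (z : dir -> box -> box -> R) : Prop :=
  (forall s p, let q := other p in
     l p s / 2 + lb q s * z s q p <= c p s /\
     c p s <= L s - l p s / 2 - lb q s * z s p q) /\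
  (forall s p, let q := other p in
     c p s + l p s / 2 <= c q s - l q s / 2 + L s * (1 - z s p q)) /\
  (forall s p, l p s >= lb p s) /\
  (z DX Bi Bj + z DX Bj Bi + z DY Bi Bj + z DY Bj Bi >= 1) /\
  (forall s, z s Bi Bj + z s Bj Bi <= 1) /\
  (forall s p, is_binary (z s p (other p))) /\
  (forall s p, let q := other p in
     c p s + l p s / 2 + L s * z s p q >=
     c q s - l q s / 2 + (lb p s + lb q s) * (z s Bi Bj + z s Bj Bi)).

(* Main.v *)
Require Import Defs.
From Stdlib Require Import Reals Lra.
Open Scope R_scope.

Ltac fin :=
  repeat match goal with
  | H : ?a = ?a -> _ |- _ => specialize (H eq_refl)
  | H : 0 = 1 -> _ |- _ => clear H
  | H : 1 = 0 -> _ |- _ => clear H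
  | H : _ /\ _ |- _ => destruct H
  end;
  unfold precedes, not_precedes, is_binary in *;
  repeat match goal with
  | |- _ /\ _ => split
  | |- forall _, _ => intro
  end.

Theorem proposition5p4 (L : dir -> R) (lb : box -> dir -> R)
    (HL : forall s, 0 < L s) (Hlb : forall k s, 0 < lb k s) :
  forall (c l : box -> dir -> R) (z : dir -> box -> box -> R),
    in_E L lb c l z <-> in_F L lb c l z.
Proof.
  intros c l z.
  pose proof (HL DX). pose proof (HL DY).
  pose proof (Hlb Bi DX). pose proof (Hlb Bi DY).
  pose proof (Hlb Bj DX). pose proof (Hlb Bj DY).
  split.
  - intros [HQ [Hb [Hnz [Hs [Hp Hn]]]]].
    pose proof (HQ DX Bi). pose proof (HQ DX Bj).
    pose proof (HQ DY Bi). pose proof (HQ DY Bj).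
    pose proof (Hp DX Bi) as P1. pose proof (Hp DX Bj) as P2.
    pose proof (Hp DY Bi) as P3. pose proof (Hp DY Bj) as P4.
    pose proof (Hn DX) as N1. pose proof (Hn DY) as N2.
    simpl in P1, P2, P3, P4.
    pose proof (Hs DX). pose proof (Hs DY).
    destruct (Hb DX Bi) as [e1|e1]; destruct (Hb DX Bj) as [e2|e2];
    destruct (Hb DY Bi) as [e3|e3]; destruct (Hb DY Bj) as [e4|e4];
    simpl in e1, e2, e3, e4;
    rewrite ?e1, ?e2, ?e3, ?e4 in *; clear Hp Hn Hs;
    (try (exfalso; apply Hnz; intros s p; destruct s, p; simpl; assumption));
    clear Hnz; fin;
    unfold in_F; repeat split; intros; simpl;
    repeat match goal with s : dir |- _ => destruct s end;
    repeat match goal with p : box |- _ => destruct p end; simpl;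
    rewrite ?e1, ?e2, ?e3, ?e4; fin; try lra.
  - intros [F1 [F2 [F3 [F4 [F5 [Hb F7]]]]]].
    pose proof (F1 DX Bi). pose proof (F1 DX Bj).
    pose proof (F1 DY Bi). pose proof (F1 DY Bj).
    pose proof (F2 DX Bi). pose proof (F2 DX Bj).
    pose proof (F2 DY Bi). pose proof (F2 DY Bj).
    pose proof (F3 DX Bi). pose proof (F3 DX Bj).
    pose proof (F3 DY Bi). pose proof (F3 DY Bj).
    pose proof (F7 DX Bi). pose proof (F7 DX Bj).
    pose proof (F7 DY Bi). pose proof (F7 DY Bj).
    pose proof (F5 DX). pose proof (F5 DY).
    simpl in *.
    destruct (Hb DX Bi) as [e1|e1]; destruct (Hb DX Bj) as [e2|e2];
    destruct (Hb DY Bi) as [e3|e3]; destruct (Hb DY Bj) as [e4|e4];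
    simpl in e1, e2, e3, e4;
    rewrite ?e1, ?e2, ?e3, ?e4 in *; clear F1 F2 F3 F7 F5;
    unfold in_E, in_Qlb; fin;
    repeat match goal with s : dir |- _ => destruct s end;
    repeat match goal with p : box |- _ => destruct p end; simpl in *;
    rewrite ?e1, ?e2, ?e3, ?e4 in *; fin; try lra;
    try (intro Hall; pose proof (Hall DX Bi); pose proof (Hall DX Bj);
         pose proof (Hall DY Bi); pose proof (Hall DY Bj); simpl in *; lra).
Qed.
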